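(* Let $T$ be a consistent and computably enumerable theory which represents every computable function. Let $g\colon\mathbb{N}\to\mathbb{N}$ be computable, monotone, with $g(n) = \Omega(n)$, and let $f\colon\mathbb{N}\to\mathbb{N}$ satisfy $f(n+1) = o(g(n))$. Then for every canonical proof verifier $\mathrm{pc}$ for $T$ there exists a proof problem $\mathbf{A}$ (with respect to $T$ and $\mathrm{pc}$) whose proof complexity is $O(g(n))$ but not $O(f(n))$.
   Context: A theory is a set of first-order sentences with equality closed under logical consequence; representability presupposes $T$ contains $\forall x\colon \neg\, Sx = 0$, $\forall x,y\colon Sx = Sy \rightarrow x=y$, $\forall x\colon x = 0 \lor \exists y\colon Sy = x$. Formal strings and lists of strings are identified with natural numbers by base-$k$ reading. A partial function $f$ is represented in $T$ by $\langle f\rangle(\mathbf{x},y)$ if whenever $f(\mathbf{x})=y$, $T \vdash \exists! y'\colon \langle f\rangle(\overline{\mathbf{x}}, y') \land \langle f\rangle(\overline{\mathbf{x}}, \overline{y})$. With $✗,✓$ distinct constants, a proof verifier for $T$ is $\mathrm{pc}\colon\mathbb{N}^2\to\{✗,✓\}$ with: if $T\vdash A$ then $\mathrm{pc}(p,A)=✓$ for some $p$, otherwise $\mathrm{pc}(p,A)=✗$ for all $p$; $T$ is computably enumerable if it has a computable proof verifier. A proof verifier is canonical if whenever $\mathrm{pc}(p,A)=✓$, $p$ is a list containing only theorems of $T$ or valid sub-proofs, and whenever $B$ follows from the items of $p$ by the usual rules of inference then $\mathrm{pc}(p \mathbin{+\!\!+} [B], B) = ✓$ (where $\mathbin{+\!\!+}$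 is list concatenation); in particular proofs of $A$ and of $B$ can be combined into a proof of $A\land B$, and a proof of $A \land B$ extended to proofs of $A$ and of $B$. $|x|$ denotes the number of digits of $x$. A proof problem is any set of sentences $\mathbf{A}\subseteq T$; $p$ $\mathrm{pc}$-decides $A$ if $\mathrm{pc}(p,A)=✓$ or $\mathrm{pc}(p,\neg A)=✓$; the proof complexity of $\mathbf{A}$ is $h(n) = \max_{A\in\mathbf{A},\, |A|\le n}\ \min_{p\ \mathrm{pc}\text{-decides } A} |p|$. *)

(* Defs.v *)
From Stdlib Require Import List.
From mathcomp Require Import all_boot.
Set Implicit Arguments. Unset Strict Implicit. Unset Printing Implicit Defensive.

Inductive prog : Type :=
| pZero | pSucc | pProj (i : nat) | pComp (f : prog) (gs : seq prog)
| pPrec (f g : prog) | pMin (f : prog).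

Inductive eval : prog -> seq nat -> nat -> Prop :=
| eZero v : eval pZero v 0
| eSucc x v : eval pSucc (x :: v) x.+1
| eProj i v : i < size v -> eval (pProj i) v (nth 0 v i)
| eComp f gs v ys y : evals gs v ys -> eval f ys y -> eval (pComp f gs) v y
| ePrec0 f g v y : eval f v y -> eval (pPrec f g) (0 :: v) y
| ePrecS f g n v r y : eval (pPrec f g) (n :: v) r -> eval g (n :: r :: v) y ->
    eval (pPrec f g) (n.+1 :: v) y
| eMin f v y : eval f (y :: v) 0 ->
    (forall z, z < y -> exists r, eval f (z :: v) r.+1) -> eval (pMin f) v y
with evals : seq prog -> seq nat -> seq nat -> Prop :=
| esNil v : evals [::] v [::]
| esCons g gs v y ys : eval g v y -> evals gs v ys -> evals (g :: gs) v (y :: ys).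

Definition computable1 (g : nat -> nat) : Prop :=
  exists c, forall n, eval c [:: n] (g n).
Definition computable2 (h : nat -> nat -> nat) : Prop :=
  exists c, forall a b, eval c [:: a; b] (h a b).

(*    A function (resp. relation) symbol is a pair (name, arity); the  *)
(*    language is given by boolean predicates fs, rs on such pairs.    *)
Inductive term : Type := Var (n : nat) | App (f : nat) (ts : seq term).

Inductive form : Type :=
| Eq (s t : term) | Rel (r : nat) (ts : seq term)
| Not (A : form) | And (A B : form) | Or (A B : form) | Imp (A B : form)
| All (n : nat) (A : form) | Ex (n : nat) (A : form).

Definition Zero : term := App 0 [::].
Definition Succ (t : term) : term := App 1 [:: t].
Definition num (n : nat) : term := iter n Succ Zero.

Fixpoint wf_term (fs : nat -> nat -> bool) (t : term) : bool :=
  match t with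
  | Var _ => true
  | App f ts => fs f (size ts) && all (wf_term fs) ts
  end.

Fixpoint wf_form (fs rs : nat -> nat -> bool) (A : form) : bool :=
  match A with
  | Eq s t => wf_term fs s && wf_term fs t
  | Rel r ts => rs r (size ts) && all (wf_term fs) ts
  | Not B => wf_form fs rs B
  | And B C | Or B C | Imp B C => wf_form fs rs B && wf_form fs rs C
  | All _ B | Ex _ B => wf_form fs rs B
  end.

Fixpoint occ_term (n : nat) (t : term) : bool :=
  match t with Var m => m == n | App _ ts => has (occ_term n) ts end.

Fixpoint free_in (n : nat) (A : form) : bool :=
  match A with
  | Eq s t => occ_term n s || occ_term n t
  | Rel _ ts => has (occ_term n) ts
  | Not B => free_in n B
  | And B C | Or B C | Imp B C => free_in n B || free_in n C
  | All m B | Ex m B => (m != n) && free_in n B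
  end.

Definition sentence (fs rs : nat -> nat -> bool) (A : form) : Prop :=
  wf_form fs rs A /\ forall n, ~~ free_in n A.

(* substitution of t for the free occurrences of variable v; it is only
   used with t closed or t a variable not occurring in the formula, so no
   capture can happen *)
Fixpoint tsubst (v : nat) (t : term) (u : term) : term :=
  match u with
  | Var m => if m == v then t else Var m
  | App f ts => App f (map (tsubst v t) ts)
  end.

Fixpoint subst (v : nat) (t : term) (A : form) : form :=
  match A with
  | Eq s u => Eq (tsubst v t s) (tsubst v t u)
  | Rel r ts => Rel r (map (tsubst v t) ts)
  | Not B => Not (subst v t B)
  | And B C => And (subst v t B) (subst v t C)
  | Or B C => Or (subst v t B) (subst v t C)
  | Imp B C => Imp (subst v t B) (subst v t C)
  | All m B => if m == v then All m B else All m (subst v t B)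
  | Ex m B => if m == v then Ex m B else Ex m (subst v t B)
  end.

Fixpoint tvarbound (t : term) : nat :=
  match t with Var m => m.+1 | App _ ts => foldr maxn 0 (map tvarbound ts) end.
Fixpoint varbound (A : form) : nat :=
  match A with
  | Eq s t => maxn (tvarbound s) (tvarbound t)
  | Rel _ ts => foldr maxn 0 (map tvarbound ts)
  | Not B => varbound B
  | And B C | Or B C | Imp B C => maxn (varbound B) (varbound C)
  | All m B | Ex m B => maxn m.+1 (varbound B)
  end.

(* exists! x_v . A  :=  exists x_v. (A /\ forall x_w. (A[x_v:=x_w] -> x_w = x_v)),
   with w fresh *)
Definition ExU (v : nat) (A : form) : form :=
  let w := maxn v.+1 (varbound A) in
  Ex v (And A (All w (Imp (subst v (Var w) A) (Eq (Var w) (Var v))))).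

Definition inst (vs : seq nat) (A : form) : form :=
  foldr (fun i B => subst i (num (nth 0 vs i)) B) A (iota 0 (size vs)).

Record structure : Type := Structure {
  dom : Type;
  dom_inh : dom;
  fint : nat -> seq dom -> dom;
  rint : nat -> seq dom -> Prop }.

Definition upd (D : Type) (e : nat -> D) (n : nat) (d : D) : nat -> D :=
  fun m => if m == n then d else e m.

Fixpoint teval (M : structure) (e : nat -> dom M) (t : term) : dom M :=
  match t with
  | Var m => e m
  | App f ts => @fint M f (map (@teval M e) ts)
  end.

Fixpoint sat (M : structure) (e : nat -> dom M) (A : form) {struct A} : Prop :=
  match A with
  | Eq s t => @teval M e s = @teval M e t
  | Rel r ts => @rint M r (map (@teval M e) ts)
  | Not B => ~ @sat M e B
  | And B C => @sat M e B /\ @sat M e C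
  | Or B C => @sat M e B \/ @sat M e C
  | Imp B C => @sat M e B -> @sat M e C
  | All m B => forall d, @sat M (upd e m d) B
  | Ex m B => exists d, @sat M (upd e m d) B
  end.

Definition entails (G : form -> Prop) (A : form) : Prop :=
  forall M : structure,
    (forall B, G B -> forall e, @sat M e B) -> forall e, @sat M e A.

Definition theory (fs rs : nat -> nat -> bool) (T : form -> Prop) : Prop :=
  (forall A, T A -> sentence fs rs A) /\
  (forall A, sentence fs rs A -> entails T A -> T A).

Definition consistent (T : form -> Prop) : Prop := ~ exists A, T A /\ T (Not A).

Inductive sym : Type :=
| sV | sF | sR | sI | sDot | sEq | sNot | sAnd | sOr | sImp | sAll | sEx.

Definition digit (c : sym) : nat :=
  match c with
  | sV => 1 | sF => 2 | sR => 3 | sI => 4 | sDot => 5 | sEq => 6 | sNot => 7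
  | sAnd => 8 | sOr => 9 | sImp => 10 | sAll => 11 | sEx => 12
  end.

(* the base: alphabet size + 1 (digit 0 is never used) *)
Definition kbase : nat := 13.

Definition rd (s : seq sym) : nat := foldl (fun acc c => acc * kbase + digit c) 0 s.

(* |x| : number of base-k digits of x (|0| = 0, the code of the empty string) *)
Fixpoint ndig_aux (fuel n : nat) : nat :=
  match fuel with
  | 0 => 0
  | fuel'.+1 => if n == 0 then 0 else (ndig_aux fuel' (n %/ kbase)).+1
  end.
Definition ndigits (n : nat) : nat := ndig_aux n n.

Definition unary (n : nat) : seq sym := rcons (nseq n sI) sDot.

Fixpoint ser_term (t : term) : seq sym :=
  match t with
  | Var m => sV :: unary m
  | App f ts => sF :: unary f ++ unary (size ts) ++ flatten (map ser_term ts)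
  end.

Fixpoint ser (A : form) : seq sym :=
  match A with
  | Eq s t => sEq :: ser_term s ++ ser_term t
  | Rel r ts => sR :: unary r ++ unary (size ts) ++ flatten (map ser_term ts)
  | Not B => sNot :: ser B
  | And B C => sAnd :: ser B ++ ser C
  | Or B C => sOr :: ser B ++ ser C
  | Imp B C => sImp :: ser B ++ ser C
  | All m B => sAll :: unary m ++ ser B
  | Ex m B => sEx :: unary m ++ ser B
  end.

Definition code (A : form) : nat := rd (ser A).

(* a list of strings is the string obtained by prefixing each item with its
   length (in unary); list concatenation is string concatenation *)
Definition enc (ls : seq (seq sym)) : seq sym :=
  flatten (map (fun s => unary (size s) ++ s) ls).

Definition axQ1 : form := All 0 (Not (Eq (Succ (Var 0)) Zero)).
Definition axQ2 : form :=
  All 0 (All 1 (Imp (Eq (Succ (Var 0)) (Succ (Var 1))) (Eq (Var 0) (Var 1)))).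
Definition axQ3 : form :=
  All 0 (Or (Eq (Var 0) Zero) (Ex 1 (Eq (Succ (Var 1)) (Var 0)))).

(* T represents every (partial) computable function: for the function of
   arity k computed by c, a formula <f>(x_0,...,x_(k-1), x_k) *)
Definition represents_all (fs rs : nat -> nat -> bool) (T : form -> Prop) : Prop :=
  T axQ1 /\ T axQ2 /\ T axQ3 /\
  forall (c : prog) (k : nat), exists phi : form,
    wf_form fs rs phi /\ (forall n, free_in n phi -> n <= k) /\
    forall (vs : seq nat) (y : nat), size vs = k -> eval c vs y ->
      T (And (ExU k (inst vs phi)) (subst k (num y) (inst vs phi))).

Definition thm (T : form -> Prop) (x : nat) : Prop := exists A, T A /\ code A = x.

(* pc p x = true stands for pc(p,x) = ✓, false for ✗ *)
Definition proof_verifier (T : form -> Prop) (pc : nat -> nat -> bool) : Prop :=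
  (forall A, T A -> exists p, pc p (code A)) /\
  (forall x, ~ thm T x -> forall p, pc p x = false).

Definition computable_pc (pc : nat -> nat -> bool) : Prop :=
  computable2 (fun p x => nat_of_bool (pc p x)).

Definition comp_enum (T : form -> Prop) : Prop :=
  exists pc, proof_verifier T pc /\ computable_pc pc.

Definition follows (Prem : form -> Prop) (B : form) : Prop :=
  (exists A C, Prem A /\ Prem C /\ B = And A C) \/
  (exists C, Prem (And B C) \/ Prem (And C B)) \/
  (exists A, Prem A /\ Prem (Imp A B)).

Definition canonical (T : form -> Prop) (pc : nat -> nat -> bool) : Prop :=
  proof_verifier T pc /\
  (forall p x, pc p x -> exists ls, p = rd (enc ls) /\
     forall s, In s ls -> thm T (rd s) \/ exists y, pc (rd s) y) /\
  (forall ls A B, pc (rd (enc ls)) (code A) ->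
     follows (fun C => In (ser C) ls) B ->
     pc (rd (enc (ls ++ [:: ser B]))) (code B)) /\
  (forall ls1 ls2 A B, pc (rd (enc ls1)) (code A) -> pc (rd (enc ls2)) (code B) ->
     pc (rd (enc (ls1 ++ ls2 ++ [:: ser (And A B)]))) (code (And A B))) /\
  (forall ls A B, pc (rd (enc ls)) (code (And A B)) ->
     pc (rd (enc (ls ++ [:: ser A]))) (code A) /\
     pc (rd (enc (ls ++ [:: ser B]))) (code B)).

Definition proof_problem (T : form -> Prop) (P : form -> Prop) : Prop :=
  forall A, P A -> T A.

Definition pc_decides (pc : nat -> nat -> bool) (p : nat) (A : form) : bool :=
  pc p (code A) || pc p (code (Not A)).

Definition min_proof_len (pc : nat -> nat -> bool) (A : form) (m : nat) : Prop :=
  (exists p, pc_decides pc p A /\ ndigits p = m) /\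
  (forall p, pc_decides pc p A -> m <= ndigits p).

Definition proof_complexity (pc : nat -> nat -> bool) (P : form -> Prop)
    (h : nat -> nat) : Prop :=
  forall n,
    (forall A m, P A -> ndigits (code A) <= n -> min_proof_len pc A m -> m <= h n) /\
    ((exists A, P A /\ ndigits (code A) <= n /\ min_proof_len pc A (h n)) \/
     ((forall A, P A -> n < ndigits (code A)) /\ h n = 0)).

Definition bigO (h g : nat -> nat) : Prop :=
  exists C N, forall n, N <= n -> h n <= C * g n.
Definition bigOmega (g h : nat -> nat) : Prop := bigO h g.
Definition littleo (f g : nat -> nat) : Prop :=
  forall C, exists N, forall n, N <= n -> C * f n <= g n.
Definition monotone (g : nat -> nat) : Prop := forall m n, m <= n -> g m <= g n.

(* Main.v *)
Require Import Defs.
From Stdlib Require Import List Classical ClassicalEpsilon.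
From mathcomp Require Import all_boot zify.
Set Implicit Arguments. Unset Strict Implicit. Unset Printing Implicit Defensive.

Lemma digit_bounds c : 0 < digit c < 13.
Proof. by case: c. Qed.

Lemma digit_inj : injective digit.
Proof. by case; case. Qed.

Lemma foldl_rd a t :
  foldl (fun acc c => acc * kbase + digit c) a t = a * 13 ^ (size t) + rd t.
Proof.
elim: t a => [|c t IH] a /=; first by rewrite /rd /= expn0 muln1 addn0.
rewrite IH /rd /= (IH (0 * kbase + digit c)) -/(rd t) /kbase expnS; lia.
Qed.

Lemma rd_cat s t : rd (s ++ t) = rd s * 13 ^ (size t) + rd t.
Proof. by rewrite /rd foldl_cat foldl_rd. Qed.

Lemma rd_rcons s c : rd (rcons s c) = rd s * 13 + digit c.
Proof. by rewrite -cats1 rd_cat /= /rd /=. Qed.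

Lemma rd_lt s : rd s < 13 ^ size s.
Proof.
elim/last_ind: s => [|s c IH] //.
rewrite rd_rcons size_rcons expnS; have := digit_bounds c; lia.
Qed.

Lemma rd_ge (s : seq sym) : 0 < size s -> 13 ^ (size s).-1 <= rd s.
Proof.
elim/last_ind: s => [|s c IH] // _.
rewrite rd_rcons size_rcons /=; have := digit_bounds c.
case: s IH => [|x s] IH /=; first by rewrite /rd /=; lia.
have := IH isT; rewrite expnS /=; lia.
Qed.

Lemma ndig_aux_spec fuel n b : n <= fuel -> (ndig_aux fuel n <= b) = (n < 13 ^ b).
Proof.
elim: fuel n b => [|fuel IH] n b /=.
  by rewrite leqn0 => /eqP ->; rewrite expn_gt0.
have [->|nz] := eqVneq n 0 => Hn /=; first by rewrite expn_gt0.

case: b => [|b]; first by rewrite expn0; lia.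
rewrite ltnS IH; last first.
  have : n %/ kbase < n by apply: ltn_Pdiv => //; lia.
  lia.
by rewrite /kbase ltn_divLR // expnSr.
Qed.

Lemma ndig_le n b : (ndigits n <= b) = (n < 13 ^ b).
Proof. exact: ndig_aux_spec. Qed.

Lemma ndigits_rd s : ndigits (rd s) = size s.
Proof.
apply/eqP; rewrite eqn_leq ndig_le rd_lt /=.
case: s => [|c s] //=.
rewrite ltnNge ndig_le -leqNgt.
by have := rd_ge (s := c :: s) isT.
Qed.

Lemma rd_inj s t : rd s = rd t -> s = t.
Proof.
elim/last_ind: s t => [|s c IH] t.
  case/lastP: t => [|t d] //; rewrite rd_rcons /=.
  by have := digit_bounds d; rewrite /rd /=; lia.
case/lastP: t => [|t d].
  by rewrite rd_rcons /rd /=; have := digit_bounds c; lia.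
rewrite !rd_rcons => E.
have Hc := digit_bounds c; have Hd := digit_bounds d.
have E1 : digit c = digit d.
  have := congr1 (modn^~ 13) E; rewrite !modnMDl !modn_small //; lia.
have E2 : rd s = rd t by lia.
by rewrite (IH _ E2) (digit_inj E1).
Qed.

Lemma size_unary n : size (unary n) = n.+1.
Proof. by rewrite /unary size_rcons size_nseq. Qed.

Lemma size_enc ls : size (enc ls) = \sum_(s <- ls) (2 * size s).+1.
Proof.
elim: ls => [|s ls IH]; first by rewrite big_nil.
by rewrite /enc /= size_cat -/(enc ls) IH big_cons size_cat size_unary; lia.
Qed.

Lemma enc_cat l1 l2 : enc (l1 ++ l2) = enc l1 ++ enc l2.
Proof. by rewrite /enc map_cat flatten_cat. Qed.

Lemma ndigits_enc ls : ndigits (rd (enc ls)) = size (enc ls).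
Proof. exact: ndigits_rd. Qed.

Lemma size_enc_cat l1 l2 : size (enc (l1 ++ l2)) = size (enc l1) + size (enc l2).
Proof. by rewrite enc_cat size_cat. Qed.

Lemma size_enc1 s : size (enc [:: s]) = (2 * size s).+1.
Proof. by rewrite size_enc big_cons big_nil addn0. Qed.

Definition term_ind2 (P : term -> Prop) (HV : forall n, P (Var n))
  (HA : forall f ts, List.Forall P ts -> P (App f ts)) : forall t, P t :=
  fix F t := match t with
  | Var n => HV n
  | App f ts => HA f ts ((fix G ts := match ts return List.Forall P ts with
        | nil => List.Forall_nil P
        | cons t ts => List.Forall_cons t (F t) (G ts) end) ts)
  end.

Lemma unary_prefix a b r r' : unary a ++ r = unary b ++ r' -> a = b /\ r = r'.
Proof.
rewrite /unary -!cats1 -!catA.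
elim: a b => [|a IH] [|b] //=; first by case.
by case=> /IH [-> ->].
Qed.

Lemma ser_term_prefix t : forall t' r r',
  ser_term t ++ r = ser_term t' ++ r' -> t = t' /\ r = r'.
Proof.
elim/term_ind2: t => [n|f ts IH] [m|f' ts'] r r' //=.
- by case=> /unary_prefix [-> ->].
- rewrite -!catA; case=> /unary_prefix [<-] /unary_prefix [Hs].
  suff L : flatten [seq ser_term i | i <- ts] ++ r =
           flatten [seq ser_term i | i <- ts'] ++ r' -> ts = ts' /\ r = r'.
    by move=> /L [-> ->].
  elim: ts ts' IH Hs r r' => [|t ts IHl] [|t' ts'] IH Hs r r' //=.
  have H1 := List.Forall_inv IH; have H2 := List.Forall_inv_tail IH.
  rewrite -!catA => /H1 [-> E].
  case: Hs => Hs.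
  by have [-> ->] := IHl ts' H2 Hs r r' E.
Qed.

Lemma ser_terms_prefix ts ts' r r' : size ts = size ts' ->
  flatten [seq ser_term i | i <- ts] ++ r =
  flatten [seq ser_term i | i <- ts'] ++ r' -> ts = ts' /\ r = r'.
Proof.
elim: ts ts' r r' => [|t ts IHl] [|t' ts'] //= r r'.
case=> Hs; rewrite -!catA => /ser_term_prefix [-> E].
by have [-> ->] := IHl ts' r r' Hs E.
Qed.

Lemma ser_prefix A : forall B r r', ser A ++ r = ser B ++ r' -> A = B /\ r = r'.
Proof.
elim: A => [s t|q ts|A IH|A IHA C IHC|A IHA C IHC|A IHA C IHC|n A IH|n A IH]
  [s' t'|q' ts'|B|B D|B D|B D|n' B|n' B] r r' //=;
  rewrite -?catA.
- by case=> /ser_term_prefix [-> ] /ser_term_prefix [-> ->].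
- by case=> /unary_prefix [->] /unary_prefix [Hs] /(ser_terms_prefix Hs) [-> ->].
- by case=> /IH [-> ->].
- by case=> /IHA [->] /IHC [-> ->].
- by case=> /IHA [->] /IHC [-> ->].
- by case=> /IHA [->] /IHC [-> ->].
- by case=> /unary_prefix [->] /IH [-> ->].
- by case=> /unary_prefix [->] /IH [-> ->].
Qed.

Lemma code_inj A B : code A = code B -> A = B.
Proof.
move=> /rd_inj E.
have := @ser_prefix A B [::] [::]; rewrite !cats0 => /(_ E).
by case.
Qed.

Lemma map_ext_In (T U : Type) (f g : T -> U) (ts : seq T) :
  (forall u, List.In u ts -> f u = g u) -> map f ts = map g ts.
Proof. elim: ts => [|u ts IH] //= H; rewrite H /= ?IH //; [move=> x Hx|]; auto. Qed.

Section Sem.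
Variable M : structure.
Implicit Types (rho : nat -> dom M).

Lemma foldr_maxn_In (t : term) ts : List.In t ts ->
  tvarbound t <= foldr maxn 0 (map tvarbound ts).
Proof.
elim: ts => [|u ts IH] //= [->|/IH H]; first exact: leq_maxl.
exact: leq_trans H (leq_maxr _ _).
Qed.

Lemma teval_ext t : forall rho rho', (forall m, m < tvarbound t -> rho m = rho' m) ->
  teval rho t = teval rho' t.
Proof.
elim/term_ind2: t => [n|f ts IH] rho rho' H /=; first by apply: H => /=.
congr (fint _ _).
elim: ts IH H => [|u ts IHl] //= IH H.
have H1 := List.Forall_inv IH; have H2 := List.Forall_inv_tail IH.
rewrite (H1 rho rho'); last by move=> m Hm; apply: H; apply: leq_trans Hm (leq_maxl _ _).
rewrite IHl //; move=> m Hm; apply: H; apply: leq_trans Hm (leq_maxr _ _).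
Qed.

Lemma teval_closed t rho rho' : tvarbound t = 0 -> teval rho t = teval rho' t.
Proof. by move=> H; apply: teval_ext => m; rewrite H. Qed.

Lemma sat_ext A : forall rho rho', (forall m, m < varbound A -> rho m = rho' m) ->
  (sat rho A <-> sat rho' A).
Proof.
elim: A => [s t|q ts|A IH|A IHA C IHC|A IHA C IHC|A IHA C IHC|n A IH|n A IH]
  rho rho' H /=.
- rewrite (@teval_ext s rho rho') ?(@teval_ext t rho rho') //.
  + by move=> m Hm; apply: H; apply: leq_trans Hm (leq_maxr _ _).
  + by move=> m Hm; apply: H; apply: leq_trans Hm (leq_maxl _ _).
- suff -> : map (teval rho) ts = map (teval rho') ts by [].
  apply: map_ext_In => u Hu.
  apply: teval_ext => m Hm; apply: H; apply: leq_trans Hm (foldr_maxn_In Hu).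
- by rewrite (IH rho rho').
- have -> := IHA rho rho'; last by move=> m Hm; apply: H; apply: leq_trans Hm (leq_maxl _ _).
  by have -> := IHC rho rho'; last by move=> m Hm; apply: H; apply: leq_trans Hm (leq_maxr _ _).
- have -> := IHA rho rho'; last by move=> m Hm; apply: H; apply: leq_trans Hm (leq_maxl _ _).
  by have -> := IHC rho rho'; last by move=> m Hm; apply: H; apply: leq_trans Hm (leq_maxr _ _).
- have -> := IHA rho rho'; last by move=> m Hm; apply: H; apply: leq_trans Hm (leq_maxl _ _).
  by have -> := IHC rho rho'; last by move=> m Hm; apply: H; apply: leq_trans Hm (leq_maxr _ _).
- split=> K d; [rewrite -(IH (upd rho n d)) | rewrite (IH _ (upd rho' n d))] => // m Hm;
  rewrite /upd; case: eqP => // _; apply: H; apply: leq_trans Hm (leq_maxr _ _).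
- split=> -[d K]; exists d; [rewrite -(IH (upd rho n d)) | rewrite (IH _ (upd rho' n d))] => // m Hm;
  rewrite /upd; case: eqP => // _; apply: H; apply: leq_trans Hm (leq_maxr _ _).
Qed.

Lemma sat_eqenv A rho rho' : (forall m, rho m = rho' m) -> (sat rho A <-> sat rho' A).
Proof. by move=> H; apply: sat_ext => m _. Qed.

Lemma teval_subst v t u rho :
  teval rho (tsubst v t u) = teval (upd rho v (teval rho t)) u.
Proof.
elim/term_ind2: u => [n|f ts IH] /=; first by rewrite /upd; case: eqP.
congr (fint _ _); rewrite -map_comp.
elim: ts IH => [|u ts IHl] //= IH.
have H1 := List.Forall_inv IH; have H2 := List.Forall_inv_tail IH.
by rewrite H1 IHl.
Qed.

Lemma sat_subst A : forall v t rho,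
  (forall m rho d, m < varbound A -> teval (upd rho m d) t = teval rho t) ->
  (sat rho (subst v t A) <-> sat (upd rho v (teval rho t)) A).
Proof.
elim: A => [s u|q ts|A IH|A IHA C IHC|A IHA C IHC|A IHA C IHC|n A IH|n A IH]
  v t rho H /=.
- by rewrite !teval_subst.
- by rewrite -map_comp; under eq_map => x do rewrite /= teval_subst.
- by rewrite IH.
- rewrite IHA ?IHC //; move=> m r d Hm; apply: H; [apply: leq_trans Hm (leq_maxr _ _)|apply: leq_trans Hm (leq_maxl _ _)].
- rewrite IHA ?IHC //; move=> m r d Hm; apply: H; [apply: leq_trans Hm (leq_maxr _ _)|apply: leq_trans Hm (leq_maxl _ _)].
- rewrite IHA ?IHC //; move=> m r d Hm; apply: H; [apply: leq_trans Hm (leq_maxr _ _)|apply: leq_trans Hm (leq_maxl _ _)].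
- case: eqP => [->|nv] /=.
    split=> K d; [rewrite -(sat_eqenv _ (rho := upd rho v d))|rewrite (sat_eqenv _ (rho' := upd (upd rho v (teval rho t)) v d))] => // m;
    by rewrite /upd; case: eqP.
  have Ht : forall d, teval (upd rho n d) t = teval rho t.
    by move=> d; apply: H; rewrite /=; apply: leq_trans (leq_maxl _ _).
  have HB : forall m (r : nat -> dom M) d, m < varbound A -> teval (upd r m d) t = teval r t.
    by move=> m r d Hm; apply: H; apply: leq_trans Hm (leq_maxr _ _).
  split=> K d.
  + have := K d; rewrite IH // Ht => K'.
    rewrite (sat_eqenv _ (rho' := upd (upd rho n d) v (teval rho t))) // => m.
    by rewrite /upd; case: (m =P n) => [->|_]; [rewrite (introF eqP nv)|case: (m == v)].
  + rewrite IH // Ht.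
    rewrite (sat_eqenv _ (rho' := upd (upd rho v (teval rho t)) n d)) // => m.
    by rewrite /upd; case: (m =P n) => [->|_]; [rewrite (introF eqP nv)|case: (m == v)].
- case: eqP => [->|nv] /=.
    split=> -[d K]; exists d; [rewrite -(sat_eqenv _ (rho := upd rho v d))|rewrite (sat_eqenv _ (rho' := upd (upd rho v (teval rho t)) v d))] => // m;
    by rewrite /upd; case: eqP.
  have Ht : forall d, teval (upd rho n d) t = teval rho t.
    by move=> d; apply: H; rewrite /=; apply: leq_trans (leq_maxl _ _).
  have HB : forall m (r : nat -> dom M) d, m < varbound A -> teval (upd r m d) t = teval r t.
    by move=> m r d Hm; apply: H; apply: leq_trans Hm (leq_maxr _ _).
  split=> -[d K]; exists d.
  + move: K; rewrite IH // Ht => K'.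
    rewrite (sat_eqenv _ (rho' := upd (upd rho n d) v (teval rho t))) // => m.
    by rewrite /upd; case: (m =P n) => [->|_]; [rewrite (introF eqP nv)|case: (m == v)].
  + rewrite IH // Ht.
    rewrite (sat_eqenv _ (rho' := upd (upd rho v (teval rho t)) n d)) // => m.
    by rewrite /upd; case: (m =P n) => [->|_]; [rewrite (introF eqP nv)|case: (m == v)].
Qed.
End Sem.

Lemma tvarbound_num x : tvarbound (num x) = 0.
Proof. by elim: x => [|x IH] //=; rewrite IH. Qed.

Lemma closed_cond (M : structure) t A : tvarbound t = 0 ->
  forall m (rho : nat -> dom M) d, m < varbound A -> teval (upd rho m d) t = teval rho t.
Proof. by move=> H m rho d _; apply: teval_closed. Qed.

Lemma var_cond (M : structure) w A : varbound A <= w ->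
  forall m (rho : nat -> dom M) d, m < varbound A -> teval (upd rho m d) (Var w) = teval rho (Var w).
Proof.
move=> H m rho d Hm /=; rewrite /upd; case: eqP => // E; subst; lia.
Qed.

Lemma sat_ExU (M : structure) (rho : nat -> dom M) k Y : sat rho (ExU k Y) ->
  exists d, sat (upd rho k d) Y /\ forall d', sat (upd rho k d') Y -> d' = d.
Proof.
rewrite /ExU /=; set w := maxn k.+1 (varbound Y).
have Hw1 : varbound Y <= w by apply: leq_maxr.
have Hw2 : k < w by apply: leq_maxl.
move=> [d [H1 H2]]; exists d; split => // d' Hd'.
have E1 : upd (upd rho k d) w d' w = d' by rewrite /upd eqxx.
have E2 : upd (upd rho k d) w d' k = d.
  have kw : (k == w) = false by apply/eqP; lia.
  by rewrite /upd kw eqxx.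
rewrite -E1 -{2}E2; apply: H2.
rewrite sat_subst; last exact: var_cond.
rewrite /= E1.
apply/(sat_ext (rho := upd rho k d')) => // m Hm.
rewrite /upd; case: (m =P k) => // _.
by have -> : (m == w) = false by apply/eqP; lia.
Qed.

Lemma wf_num (fs : nat -> nat -> bool) x : fs 0 0 -> fs 1 1 -> wf_term fs (num x).
Proof. by move=> H0 H1; elim: x => [|x IH] /=; rewrite ?H0 ?H1 ?IH. Qed.

Lemma wf_tsubst (fs : nat -> nat -> bool) v t u : wf_term fs t -> wf_term fs u -> wf_term fs (tsubst v t u).
Proof.
move=> Ht; elim/term_ind2: u => [n|f ts IH] /=; first by case: eqP.
rewrite size_map => /andP [-> H] /=.
elim: ts IH H => [|u ts IHl] //= IH /andP [Hu Hts].
have H1 := List.Forall_inv IH; have H2 := List.Forall_inv_tail IH.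
by rewrite H1 // IHl.
Qed.

Lemma wf_subst (fs rs : nat -> nat -> bool) v t A : wf_term fs t -> wf_form fs rs A -> wf_form fs rs (subst v t A).
Proof.
move=> Ht; elim: A => [s u|q ts|A IH|A IHA C IHC|A IHA C IHC|A IHA C IHC|n A IH|n A IH] /=.
- by move=> /andP [H1 H2]; rewrite !wf_tsubst.
- rewrite size_map => /andP [-> H] /=.
  elim: ts H => [|u ts IHl] //= /andP [Hu Hts].
  by rewrite wf_tsubst // IHl.
- exact: IH.
- by move=> /andP [H1 H2]; rewrite IHA ?IHC.
- by move=> /andP [H1 H2]; rewrite IHA ?IHC.
- by move=> /andP [H1 H2]; rewrite IHA ?IHC.
- by case: eqP => _ H //=; apply: IH.
- by case: eqP => _ H //=; apply: IH.
Qed.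

Lemma occ_closed n t : tvarbound t = 0 -> occ_term n t = false.
Proof.
elim/term_ind2: t => [m|f ts IH] //=.
elim: ts IH => [|u ts IHl] //= IH /eqP; rewrite -leqn0 geq_max !leqn0 => /andP [/eqP Hu /eqP Hts].
have H1 := List.Forall_inv IH; have H2 := List.Forall_inv_tail IH.
by rewrite H1 // IHl.
Qed.

Lemma occ_tsubst n v t u : tvarbound t = 0 -> occ_term n (tsubst v t u) ->
  occ_term n u && (n != v).
Proof.
move=> Ht; elim/term_ind2: u => [m|f ts IH] /=.
  case: eqP => [->|nv]; first by rewrite occ_closed.
  by move=> /eqP <-; rewrite eqxx; apply/eqP.
elim: ts IH => [|u ts IHl] //= IH.
have H1 := List.Forall_inv IH; have H2 := List.Forall_inv_tail IH.
case/orP => [/H1 /andP [-> ->] //|/(IHl H2) /andP [-> ->]]; by rewrite orbT.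
Qed.

Lemma free_subst n v t A : tvarbound t = 0 -> free_in n (subst v t A) ->
  free_in n A && (n != v).
Proof.
move=> Ht; elim: A => [s u|q ts|A IH|A IHA C IHC|A IHA C IHC|A IHA C IHC|m A IH|m A IH] /=.
- by case/orP => /(occ_tsubst Ht) /andP [-> ->]; rewrite ?orbT.
- elim: ts => [|u ts IHl] //=.
  by case/orP => [/(occ_tsubst Ht) /andP [-> ->] //|/IHl /andP [-> ->]]; rewrite orbT.
- exact: IH.
- by case/orP => [/IHA|/IHC] /andP [-> ->]; rewrite ?orbT.
- by case/orP => [/IHA|/IHC] /andP [-> ->]; rewrite ?orbT.
- by case/orP => [/IHA|/IHC] /andP [-> ->]; rewrite ?orbT.
- case: eqP => [-> /= /andP [H1 H2]|mv /= /andP [-> /IH /andP [-> ->]] //].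
  by rewrite H1 H2 eq_sym.
- case: eqP => [-> /= /andP [H1 H2]|mv /= /andP [-> /IH /andP [-> ->]] //].
  by rewrite H1 H2 eq_sym.
Qed.

Definition computes (c : prog) (k : nat) (F : seq nat -> nat) :=
  forall v, size v = k -> eval c v (F v).

Lemma proj_c i k : i < k -> computes (pProj i) k (fun v => nth 0 v i).
Proof. by move=> H v Hv; apply: eProj; rewrite Hv. Qed.

Lemma comp1_c c F g G k : computes c 1 F -> computes g k G ->
  computes (pComp c [:: g]) k (fun v => F [:: G v]).
Proof.
move=> Hc Hg v Hv; apply: (eComp (ys := [:: G v])); last exact: Hc.
by apply: esCons; [apply: Hg|apply: esNil].
Qed.

Lemma comp2_c c F g1 G1 g2 G2 k : computes c 2 F -> computes g1 k G1 -> computes g2 k G2 ->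
  computes (pComp c [:: g1; g2]) k (fun v => F [:: G1 v; G2 v]).
Proof.
move=> Hc H1 H2 v Hv; apply: (eComp (ys := [:: G1 v; G2 v])); last exact: Hc.
by apply: esCons; [apply: H1|apply: esCons; [apply: H2|apply: esNil]].
Qed.

Lemma succ_c : computes pSucc 1 (fun v => (nth 0 v 0).+1).
Proof. by case=> [|x [|]] //= _; apply: eSucc. Qed.

Fixpoint primrec (F : seq nat -> nat) (G : seq nat -> nat) (n : nat) (w : seq nat) : nat :=
  match n with
  | 0 => F w
  | n'.+1 => G [:: n', primrec F G n' w & w]
  end.

Lemma prec_c f F g G k : computes f k F -> computes g k.+2 G ->
  computes (pPrec f g) k.+1 (fun v => primrec F G (head 0 v) (behead v)).
Proof.
move=> Hf Hg [|n w] //= [Hw].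
elim: n => [|n IH] /=; first by apply: ePrec0; apply: Hf.
by apply: (ePrecS IH); apply: Hg => /=; rewrite Hw.
Qed.

Fixpoint pconst (n : nat) : prog :=
  match n with 0 => pZero | n'.+1 => pComp pSucc [:: pconst n'] end.

Lemma const_c n k : computes (pconst n) k (fun _ => n).
Proof.
elim: n => [|n IH] v Hv /=; first exact: eZero.
by apply: (comp1_c succ_c IH).
Qed.

Definition padd : prog := pPrec (pProj 0) (pComp pSucc [:: pProj 1]).
Lemma add_c : computes padd 2 (fun v => nth 0 v 0 + nth 0 v 1).
Proof.
move=> v Hv.
have H := prec_c (proj_c (i := 0) (k := 1) isT) (comp1_c succ_c (proj_c (i := 1) (k := 3) isT)) Hv.
suff -> : nth 0 v 0 + nth 0 v 1 = primrec (fun v => nth 0 v 0) (fun v => (nth 0 [:: nth 0 v 1] 0).+1) (head 0 v) (behead v) by [].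
case: v Hv {H} => [|a [|b [|]]] //= _.
by elim: a => [|a IH] //=; rewrite -IH.
Qed.

Lemma computes_ext c k F F' : computes c k F ->
  (forall v, size v = k -> F v = F' v) -> computes c k F'.
Proof. by move=> H E v Hv; rewrite -E //; apply: H. Qed.

Definition pmul : prog := pPrec (pconst 0) (pComp padd [:: pProj 1; pProj 2]).
Lemma mul_c : computes pmul 2 (fun v => nth 0 v 0 * nth 0 v 1).
Proof.
apply: (computes_ext (prec_c (const_c 0 (k := 1)) (comp2_c add_c (proj_c (i := 1) (k := 3) isT) (proj_c (i := 2) (k := 3) isT)))).
case=> [|a [|b [|]]] //= _.
by elim: a => [|a IH] //=; rewrite IH mulSn addnC.
Qed.

Definition ppow13 : prog := pPrec (pconst 1) (pComp pmul [:: pProj 1; pconst 13]).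
Lemma pow13_c : computes ppow13 1 (fun v => 13 ^ nth 0 v 0).
Proof.
apply: (computes_ext (prec_c (const_c 1 (k := 0)) (comp2_c mul_c (proj_c (i := 1) (k := 2) isT) (const_c 13 (k := 2))))).
case=> [|a [|]] //= _.
by elim: a => [|a IH] //=; rewrite IH expnS mulnC.
Qed.

Definition ppred : prog := pPrec (pconst 0) (pProj 0).
Lemma pred_c : computes ppred 1 (fun v => (nth 0 v 0).-1).
Proof.
apply: (computes_ext (prec_c (const_c 0 (k := 0)) (proj_c (i := 0) (k := 2) isT))).
by case=> [|a [|]] //= _; case: a.
Qed.

Definition psub' : prog := pPrec (pProj 0) (pComp ppred [:: pProj 1]).
Definition psub : prog := pComp psub' [:: pProj 1; pProj 0].
Lemma sub_c : computes psub 2 (fun v => nth 0 v 0 - nth 0 v 1).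
Proof.
have H : computes psub' 2 (fun v => nth 0 v 1 - nth 0 v 0).
  apply: (computes_ext (prec_c (proj_c (i := 0) (k := 1) isT) (comp1_c pred_c (proj_c (i := 1) (k := 3) isT)))).
  case=> [|b [|a [|]]] //= _.
  by elim: b => [|b IH] //=; rewrite ?subn0 // IH subnS.
apply: (computes_ext (comp2_c H (proj_c (i := 1) (k := 2) isT) (proj_c (i := 0) (k := 2) isT))).
by case=> [|a [|b [|]]].
Qed.

Definition pleq : prog := pComp psub [:: pconst 1; psub].
Lemma leq_c : computes pleq 2 (fun v => nat_of_bool (nth 0 v 0 <= nth 0 v 1)).
Proof.
apply: (computes_ext (comp2_c sub_c (const_c 1 (k := 2)) sub_c)).
case=> [|a [|b [|]]] //= _.
by rewrite -subn_eq0; case: (a - b) => [|?].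
Qed.

Definition psg : prog := pComp psub [:: pconst 1; pComp psub [:: pconst 1; pProj 0]].
Lemma sg_c : computes psg 1 (fun v => nat_of_bool (0 < nth 0 v 0)).
Proof.
apply: (computes_ext (comp2_c sub_c (const_c 1 (k := 1)) (comp2_c sub_c (const_c 1 (k := 1)) (proj_c (i := 0) (k := 1) isT)))).
by case=> [|a [|]] //= _; case: a => [|[|a]].
Qed.

Definition step (acc : nat) (c : sym) := acc * kbase + digit c.

Fixpoint prd (s : seq sym) (base : prog) : prog :=
  match s with
  | [::] => base
  | c :: s' => prd s' (pComp padd [:: pComp pmul [:: base; pconst 13]; pconst (digit c)])
  end.

Lemma prd_c s base k B : computes base k B ->
  computes (prd s base) k (fun v => foldl step (B v) s).
Proof.
elim: s base B => [|c s IH] base B HB //=.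
apply: (computes_ext (IH _ _ (comp2_c add_c (comp2_c mul_c HB (const_c 13 (k := k))) (const_c (digit c) (k := k))))).
by move=> v _.
Qed.

Definition pcst s := prd s pZero.
Lemma cst_c s k : computes (pcst s) k (fun _ => rd s).
Proof. exact: (prd_c s (const_c 0 (k := k))). Qed.

Definition p5x3 : prog := pComp padd [:: pComp pmul [:: pProj 0; pconst 5]; pconst 3].
Lemma c5x3 : computes p5x3 1 (fun v => 5 * nth 0 v 0 + 3).
Proof.
apply: (computes_ext (comp2_c add_c (comp2_c mul_c (proj_c (i := 0) (k := 1) isT) (const_c 5 (k := 1))) (const_c 3 (k := 1)))).
by move=> v _ /=; rewrite mulnC.
Qed.

Definition three := [:: sF; sDot; sDot].
Definition five := [:: sF; sI; sDot; sI; sDot].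
Definition pre := [:: sEx; sDot; sAnd; sEq; sV; sDot].

Fixpoint Rf (x : nat) : nat :=
  match x with 0 => rd three | x'.+1 => rd five * 13 ^ (5 * x' + 3) + Rf x' end.

Lemma size_ser_num x : size (ser_term (num x)) = 5 * x + 3.
Proof. by elim: x => [|x IH] //=; rewrite cats0 IH; lia. Qed.

Lemma ser_num_S x : ser_term (num x.+1) = five ++ ser_term (num x).
Proof. by rewrite /= cats0. Qed.

Lemma Rf_spec x : Rf x = rd (ser_term (num x)).
Proof.
elim: x => [|x IH] //.
by rewrite ser_num_S rd_cat size_ser_num -IH.
Qed.

Definition pR : prog := pPrec (pcst three)
  (pComp padd [:: pComp pmul [:: pcst five; pComp ppow13 [:: pComp p5x3 [:: pProj 0]]]; pProj 1]).
Lemma R_c : computes pR 1 (fun v => Rf (nth 0 v 0)).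
Proof.
apply: (computes_ext (prec_c (cst_c three (k := 0))
  (comp2_c add_c (comp2_c mul_c (cst_c five (k := 2))
     (comp1_c pow13_c (comp1_c c5x3 (proj_c (i := 0) (k := 2) isT)))) (proj_c (i := 1) (k := 2) isT)))).
case=> [|x [|]] //= _.
by elim: x => [|x IH] //=; rewrite IH.
Qed.

Lemma ndigits_le_self x : ndigits x <= x.
Proof. by rewrite ndig_le; elim: x => [|x IH] //; rewrite expnS; lia. Qed.

Lemma sum_ltn n x : \sum_(0 <= j < x) (j < n) = minn n x.
Proof.
elim: x => [|x IH]; first by rewrite big_geq // minn0.
rewrite big_nat_recr //= IH; case: (ltnP x n) => H; lia.
Qed.

Lemma ndigits_sum x : ndigits x = \sum_(0 <= j < x) (13 ^ j <= x).
Proof.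
have E : forall j, (13 ^ j <= x) = (j < ndigits x).
  by move=> j; rewrite leqNgt -ndig_le -ltnNge.
under eq_bigr => j _ do rewrite E.
by rewrite sum_ltn; have := ndigits_le_self x; lia.
Qed.

Definition pS : prog := pPrec (pconst 0)
  (pComp padd [:: pProj 1; pComp pleq [:: pComp ppow13 [:: pProj 0]; pProj 2]]).
Definition pndig : prog := pComp pS [:: pProj 0; pProj 0].
Lemma ndig_c : computes pndig 1 (fun v => ndigits (nth 0 v 0)).
Proof.
have H : computes pS 2 (fun v => \sum_(0 <= j < nth 0 v 0) (13 ^ j <= nth 0 v 1)).
  apply: (computes_ext (prec_c (const_c 0 (k := 1))
    (comp2_c add_c (proj_c (i := 1) (k := 3) isT)
       (comp2_c leq_c (comp1_c pow13_c (proj_c (i := 0) (k := 3) isT)) (proj_c (i := 2) (k := 3) isT))))).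
  case=> [|i [|x [|]]] //= _.
  elim: i => [|i IH]; first by rewrite big_geq.
  by rewrite big_nat_recr //= -IH.
apply: (computes_ext (comp2_c H (proj_c (i := 0) (k := 1) isT) (proj_c (i := 0) (k := 1) isT))).
by move=> v _ /=; rewrite ndigits_sum.
Qed.

Definition Df (x : nat) : nat := (rd pre * 13 ^ (5 * x + 3) + Rf x) * 13 ^ (ndigits x) + x.

Definition pD : prog :=
  pComp padd [:: pComp pmul [:: pComp padd [:: pComp pmul [:: pcst pre; pComp ppow13 [:: p5x3]];
                                                 pR];
                                 pComp ppow13 [:: pndig]];
                 pProj 0].
Lemma D_c : computes pD 1 (fun v => Df (nth 0 v 0)).
Proof.
apply: (computes_ext (comp2_c add_c (comp2_c mul_c (comp2_c add_c (comp2_c mul_c (cst_c pre (k := 1))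
   (comp1_c pow13_c c5x3)) R_c) (comp1_c pow13_c ndig_c)) (proj_c (i := 0) (k := 1) isT))).
by move=> v _.
Qed.

Section Diag.
Variable pc : nat -> nat -> bool.
Variable cpc : prog.
Hypothesis Hpc : forall a b, eval cpc [:: a; b] (pc a b).
Variable B : nat -> nat.
Variable cB : prog.
Hypothesis HB : forall n, eval cB [:: n] (B n).

Lemma pc_c : computes cpc 2 (fun v => pc (nth 0 v 0) (nth 0 v 1)).
Proof. by case=> [|a [|b [|]]] //= _; apply: Hpc. Qed.
Lemma B_c : computes cB 1 (fun v => B (nth 0 v 0)).
Proof. by case=> [|a [|]] //= _; apply: HB. Qed.

Definition Sumf N y := \sum_(0 <= p < N) pc p y.
Definition pSum : prog := pPrec (pconst 0) (pComp padd [:: pProj 1; pComp cpc [:: pProj 0; pProj 2]]).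
Lemma Sum_c : computes pSum 2 (fun v => Sumf (nth 0 v 0) (nth 0 v 1)).
Proof.
apply: (computes_ext (prec_c (const_c 0 (k := 1))
   (comp2_c add_c (proj_c (i := 1) (k := 3) isT)
      (comp2_c pc_c (proj_c (i := 0) (k := 3) isT) (proj_c (i := 2) (k := 3) isT))))).
case=> [|i [|x [|]]] //= _; rewrite /Sumf.
elim: i => [|i IH]; first by rewrite big_geq.
by rewrite big_nat_recr //= -IH.
Qed.

Definition df x := nat_of_bool (0 < Sumf (13 ^ B (ndigits (Df x))) (Df x)).
Definition pd : prog := pComp psg [:: pComp pSum [:: pComp ppow13 [:: pComp cB [:: pComp pndig [:: pD]]]; pD]].
Lemma d_c : computes pd 1 (fun v => df (nth 0 v 0)).
Proof.
apply: (computes_ext (comp1_c sg_c (comp2_c Sum_c (comp1_c pow13_c (comp1_c B_c (comp1_c ndig_c D_c))) D_c))).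
by move=> v _.
Qed.

Lemma df_eval x : eval pd [:: x] (df x).
Proof. exact: (d_c (v := [:: x])). Qed.

Lemma df0 x : df x = 0 -> forall p, p < 13 ^ B (ndigits (Df x)) -> pc p (Df x) = false.
Proof.
rewrite /df /Sumf; case: ltnP => //; rewrite leqn0 => /eqP S _ p Hp.
apply/negbTE/negP => H.
have : pc p (Df x) <= \sum_(0 <= q < 13 ^ B (ndigits (Df x))) pc q (Df x).
  by rewrite (bigD1_seq p) //= ?mem_iota ?iota_uniq ?leq_addr //; lia.
by rewrite S H.
Qed.

Lemma df1 x : df x <> 0 -> exists p, p < 13 ^ B (ndigits (Df x)) /\ pc p (Df x).
Proof.
rewrite /df /Sumf; case: ltnP => // H _.
elim: (13 ^ B (ndigits (Df x))) H => [|N IH]; first by rewrite big_geq.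
rewrite big_nat_recr //=; case E: (pc N (Df x)).
  by move=> _; exists N; split.
rewrite addn0 => /IH [p [Hp Hp']]; exists p; split => //; lia.
Qed.
End Diag.

Lemma code_sigma (X : form) x :
  code (Ex 0 (And (Eq (Var 0) (num x)) X)) = rd pre * 13 ^ (5 * x + 3) * 13 ^ size (ser X)
     + Rf x * 13 ^ size (ser X) + code X.
Proof.
rewrite /code.
have -> : ser (Ex 0 (And (Eq (Var 0) (num x)) X)) = (pre ++ ser_term (num x)) ++ ser X.
  by [].
by rewrite rd_cat rd_cat size_ser_num Rf_spec mulnDl.
Qed.

Lemma code_sigma_D (X : form) :
  code (Ex 0 (And (Eq (Var 0) (num (code X))) X)) = Df (code X).
Proof.
rewrite code_sigma /Df mulnDl.
by rewrite {3 6}/code ndigits_rd.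
Qed.

Lemma upd_swap (D : Type) (r : nat -> D) a b d1 d2 : a != b ->
  forall m, upd (upd r a d1) b d2 m = upd (upd r b d2) a d1 m.
Proof.
move=> ab m; rewrite /upd; case: (eqVneq m b) => [Eb|mb]; case: (eqVneq m a) => [Ea|ma] //.
by move: ab; rewrite -Ea -Eb eqxx.
Qed.

Lemma L1 (fs rs : nat -> nat -> bool) (T : form -> Prop) (pc : nat -> nat -> bool) (Bf : nat -> nat) (cB : prog) :
  fs 0 0 -> fs 1 1 -> theory fs rs T -> consistent T -> represents_all fs rs T ->
  proof_verifier T pc -> computable_pc pc -> (forall n, eval cB [:: n] (Bf n)) ->
  exists H, T H /\ forall p, pc p (code H) -> Bf (ndigits (code H)) < ndigits p.
Proof.
move=> F0 F1 [Tsent Tclos] Tcons [Q1 [Q2 [Q3 Hrep]]] [PV1 PV2] [cpc Hcpc] HB.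
have Hpc : forall a b, eval cpc [:: a; b] (pc a b) by [].
have [dl [wfd [freed Hd]]] := Hrep (pd cpc cB) 1.
set X := subst 1 Zero dl.
set e := code X.
set sigma := Ex 0 (And (Eq (Var 0) (num e)) X).
have Hcode : code sigma = Df e by rewrite /sigma code_sigma_D.
set y := df pc Bf e.
have HT := Hd [:: e] y erefl (df_eval Hpc HB e).
have Hinst : inst [:: e] dl = subst 0 (num e) dl by [].
rewrite Hinst in HT.
pose Phi (M : structure) (rho : nat -> dom M) a :=
  sat (upd (upd rho 1 a) 0 (teval rho (num e))) dl.
have Ssig : forall M (rho : nat -> dom M), sat rho sigma <-> Phi M rho (teval rho Zero).
  move=> M rho; rewrite /sigma /Phi /=; split.
  - move=> [d [Hd1 Hd2]].
    move: Hd2; rewrite /X sat_subst; last exact: closed_cond.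
    have Ed : d = teval rho (num e).
      by move: Hd1; rewrite {1}/upd eqxx => ->; apply: teval_closed; rewrite tvarbound_num.
    rewrite -Ed (teval_closed _ rho) //.
    move=> K; apply: (proj1 (sat_eqenv dl _) K) => m; exact: upd_swap.
  - move=> K; exists (teval rho (num e)); split.
      by rewrite {1}/upd eqxx; apply: teval_closed; rewrite tvarbound_num.
    rewrite /X sat_subst; last exact: closed_cond.
    rewrite (teval_closed _ rho) //.
    apply: (proj1 (sat_eqenv dl _) K) => m; exact: upd_swap.
have SY : forall M (rho : nat -> dom M) a, sat (upd rho 1 a) (subst 0 (num e) dl) <-> Phi M rho a.
  move=> M rho a; rewrite sat_subst; last by apply: closed_cond; rewrite tvarbound_num.
  by rewrite /Phi (teval_closed _ rho) // tvarbound_num.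
have SR : forall M (rho : nat -> dom M),
    sat rho (And (ExU 1 (subst 0 (num e) dl)) (subst 1 (num y) (subst 0 (num e) dl))) ->
    (forall a, Phi M rho a -> a = teval rho (num y)) /\ Phi M rho (teval rho (num y)).
  move=> M rho [/sat_ExU [d [Hd1 Hd2]] H2].
  have H2' : Phi M rho (teval rho (num y)).
    have := proj1 (@sat_subst M _ 1 (num y) rho (closed_cond (tvarbound_num y))) H2.
    by rewrite SY.
  split=> // a /SY Ha.
  by rewrite (Hd2 _ Ha) -(Hd2 _ (proj2 (SY _ _ _) H2')).
have sent_sigma : sentence fs rs sigma.
  split.
    by rewrite /= wf_num // /X wf_subst //= F0.
  move=> n /=; rewrite occ_closed ?tvarbound_num // orbF.
  case: (n =P 0) => [->|n0] //=.
  rewrite eq_sym (introF eqP n0) /=.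
  apply/negP => /(free_subst (n := n) (v := 1) (t := Zero) (A := dl) erefl) /andP [Hf n1].
  have Hn := freed n Hf; clear Hf; move: n0 n1 Hn; case: n => [|[|n]] //.
case: (eqVneq y 0) => Hy.
-
  have Tsig : T sigma.
    apply: Tclos => // M HM rho.
    have [_ K] := SR M rho (HM _ HT rho).
    by apply/Ssig; rewrite Hy in K.
  exists sigma; split => // p Hp.
  rewrite ltnNge ndig_le; apply/negP => Hlt.
  have := @df0 pc Bf e Hy p; rewrite -Hcode => /(_ Hlt).
  by rewrite Hp.
- exfalso.
  have [p [Hp1 Hp2]] := @df1 pc Bf e (elimN eqP Hy).
  rewrite -Hcode in Hp2.
  have Hthm : thm T (code sigma).
    by apply: NNPP => Hn; have := PV2 _ Hn p; rewrite Hp2.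
  have [A [TA EA]] := Hthm.
  have := code_inj EA => EA'; subst A.
  have Hy1 : y = 1 by rewrite /y /df in Hy *; move: Hy; case: (0 < _).
  apply: Tcons; exists axQ1; split => //.
  apply: Tclos.
    split; first by rewrite /= F0 F1.
    by move=> n /=; case: (n =P 0) => [->|] //= /eqP; rewrite eq_sym => /negbTE ->.
  move=> M HM rho.
  have S1 := proj1 (Ssig M rho) (HM _ TA rho).
  have [Hu _] := SR M rho (HM _ HT rho).
  have E1 := Hu _ S1; rewrite Hy1 /= in E1.
  have := HM _ Q1 rho (teval rho Zero).
  by rewrite /= {1}/upd eqxx /= -E1.
Qed.

Definition Ef (v : nat) : form := All v (Eq Zero Zero).

Fixpoint Wf (fuel t : nat) : form :=
  match fuel with
  | 0 => Ef 0
  | fuel'.+1 => if t < 20 then Ef (t - 9)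
                else And (Wf fuel' (t.-1)./2) (Wf fuel' (t.-1 - (t.-1)./2))
  end.
Definition W t := Wf t t.

Lemma Wf_S f t : Wf f.+1 t = if t < 20 then Ef (t - 9)
                else And (Wf f (t.-1)./2) (Wf f (t.-1 - (t.-1)./2)).
Proof. by []. Qed.

Lemma Wf_stable f t : t <= f -> Wf f.+1 t = Wf f t.
Proof.
elim: f t => [|f IH] t Ht; first by move: Ht; rewrite leqn0 => /eqP ->.
rewrite Wf_S [in RHS]Wf_S.
case: ifP => // _; rewrite !IH //; lia.
Qed.

Lemma Wf_W f t : t <= f -> Wf f t = W t.
Proof.
move=> H; rewrite -(subnK H); elim: (f - t) => [|k IH] //.
by rewrite addSn Wf_stable ?IH //; lia.
Qed.

Lemma W_eq t : W t = if t < 20 then Ef (t - 9)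
                     else And (W (t.-1)./2) (W (t.-1 - (t.-1)./2)).
Proof.
rewrite /W; case: t => [|t] //.
rewrite Wf_S; case: ifP => // _; rewrite !Wf_W //; lia.
Qed.

Lemma size_Ef v : size (ser (Ef v)) = v + 9.
Proof. by rewrite /= size_cat size_unary /=; lia. Qed.

Lemma size_W t : 9 <= t -> size (ser (W t)) = t.
Proof.
elim/ltn_ind: t => t IH Ht; rewrite W_eq.
case: ifP => H; first by rewrite size_Ef; lia.
rewrite /= size_cat !IH; lia.
Qed.

Lemma sent_W (fs rs : nat -> nat -> bool) t : fs 0 0 -> sentence fs rs (W t).
Proof.
move=> F0; elim/ltn_ind: t => t IH; rewrite W_eq.
case: ifP => H.
  by split; [rewrite /= F0| move=> n /=; rewrite andbF].
have [H1 H2] := IH (t.-1)./2 ltac:(lia).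
have [H3 H4] := IH (t.-1 - (t.-1)./2) ltac:(lia).
split; first by rewrite /= H1 H3.
by move=> n /=; rewrite negb_or H2 H4.
Qed.

Lemma sat_W (M : structure) (rho : nat -> dom M) t : sat rho (W t).
Proof.
elim/ltn_ind: t rho => t IH rho; rewrite W_eq.
case: ifP => H; first by move=> d.
split; apply: IH; lia.
Qed.

Lemma fin_bound N (P : nat -> nat -> Prop) :
  (forall t c c', P t c -> c <= c' -> P t c') ->
  (forall t, t < N -> exists c, P t c) -> exists K, forall t, t < N -> P t K.
Proof.
move=> Hm; elim: N => [|N IH] H; first by exists 0.
have [K HK] := IH (fun t Ht => H t (ltnW Ht)).
have [c Hc] := H N (ltnSn N).
exists (maxn K c) => t; rewrite ltnS leq_eqVlt => /orP [/eqP ->|Ht].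
  by apply: Hm Hc _; apply: leq_maxr.
by apply: Hm (HK t Ht) _; apply: leq_maxl.
Qed.

Lemma In_appl (T : Type) (x : T) l r : List.In x l -> List.In x (l ++ r).
Proof. by move=> H; apply: List.in_or_app; left. Qed.

Section Pads.
Variables (fs rs : nat -> nat -> bool) (T : form -> Prop) (pc : nat -> nat -> bool).
Hypothesis F0 : fs 0 0.
Hypothesis Tth : theory fs rs T.
Hypothesis Hcan : canonical T pc.

Lemma T_W t : T (W t).
Proof.
case: Tth => _ Tclos; apply: Tclos; first exact: sent_W.
by move=> M _ rho; apply: sat_W.
Qed.

Lemma proof_list p x : pc p x -> exists ls, p = rd (enc ls).
Proof.
case: Hcan => _ [C2 _] H.
by have [ls [-> _]] := C2 p x H; exists ls.
Qed.

Lemma items2 Y Y' : T Y -> T Y' -> exists ls A, pc (rd (enc ls)) (code A) /\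
  List.In (ser Y) ls /\ List.In (ser Y') ls.
Proof.
case: Hcan => [[PV1 PV2] [C2 [C3 [C4 C5]]]] TY TY'.
have [p1 H1] := PV1 _ TY; have [p2 H2] := PV1 _ TY'.
have [ls1 E1] := proof_list H1; have [ls2 E2] := proof_list H2.
subst.
have H3 := C4 _ _ _ _ H1 H2.
have [H4 _] := C5 _ _ _ H3.
have H5 := C3 _ _ Y' H4.
exists (((ls1 ++ ls2 ++ [:: ser (And Y Y')]) ++ [:: ser Y]) ++ [:: ser Y']), Y'.
split.
  apply: H5; right; left; exists Y; right.
  by apply: In_appl; rewrite !List.in_app_iff /=; tauto.
by split; rewrite !List.in_app_iff /=; tauto.
Qed.

Definition Pair t c := exists ls A, pc (rd (enc ls)) (code A) /\
  List.In (ser (W t)) ls /\ List.In (ser (W t.+1)) ls /\ size (enc ls) <= c.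

Lemma pair_all : exists K, forall t, Pair t (8 * t + K).
Proof.
case: Hcan => [[PV1 PV2] [C2 [C3 [C4 C5]]]].
have [K HK] : exists K, forall t, t < 20 -> Pair t K.
  apply: fin_bound.
    by move=> t c c' [ls [A [H1 [H2 [H3 H4]]]]] Hc; exists ls, A; split; [done|split; [done|split; [done|lia]]].
  move=> t _; have [ls [A [H1 [H2 H3]]]] := items2 (T_W t) (T_W t.+1).
  by exists (size (enc ls)), ls, A.
exists K; elim/ltn_ind => t IH.
case: (ltnP t 20) => Ht.
  have [ls [A [H1 [H2 [H3 H4]]]]] := HK t Ht.
  by exists ls, A; split; [done|split; [done|split; [done|lia]]].
set t' := (t.-1)./2.
have [ls [A [H1 [H2 [H3 H4]]]]] := IH t' ltac:(lia).
have Hin : forall u, t' <= u <= t'.+1 -> List.In (ser (W u)) ls.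
  move=> u Hu; have [->|->] : u = t' \/ u = t'.+1 by lia.
  exact: H2. exact: H3.
have EWt : W t = And (W t') (W (t.-1 - t')) by rewrite W_eq; case: ifP => //; lia.
have EWt1 : W t.+1 = And (W (t.+1.-1)./2) (W (t.+1.-1 - (t.+1.-1)./2)) by rewrite W_eq; case: ifP => //; lia.
have G1 := C3 _ _ (W t) H1.
have G1' : pc (rd (enc (ls ++ [:: ser (W t)]))) (code (W t)).
  apply: G1; left; exists (W t'), (W (t.-1 - t')); split; first by apply: Hin; lia.
  by split; [apply: Hin; lia|].
have G2 := C3 _ _ (W t.+1) G1'.
have G2' : pc (rd (enc ((ls ++ [:: ser (W t)]) ++ [:: ser (W t.+1)]))) (code (W t.+1)).
  apply: G2; left; exists (W (t.+1.-1)./2), (W (t.+1.-1 - (t.+1.-1)./2)).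
  split; first by apply: In_appl; apply: Hin; lia.
  by split; [apply: In_appl; apply: Hin; lia|].
exists ((ls ++ [:: ser (W t)]) ++ [:: ser (W t.+1)]), (W t.+1).
split => //; split; first by apply: In_appl; rewrite List.in_app_iff /=; tauto.
split; first by rewrite List.in_app_iff /=; tauto.
rewrite !size_enc_cat !size_enc1 !size_W; lia.
Qed.

Lemma pad_cost : exists K, forall j, 20 <= j -> exists ls,
  pc (rd (enc ls)) (code (W j)) /\ size (enc ls) <= 6 * j + K.
Proof.
case: Hcan => [[PV1 PV2] [C2 [C3 [C4 C5]]]].
have [K HK] := pair_all.
exists K.+1 => j Hj.
set t' := (j.-1)./2.
have [ls [A [H1 [H2 [H3 H4]]]]] := HK t'.
have EW : W j = And (W t') (W (j.-1 - t')) by rewrite W_eq; case: ifP => //; lia.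
exists (ls ++ [:: ser (W j)]); split.
  apply: (C3 _ _ _ H1); left; exists (W t'), (W (j.-1 - t')); split; first exact: H2.
  split; last exact: EW.
  have [->|->] : j.-1 - t' = t' \/ j.-1 - t' = t'.+1 by lia.
  exact: H2. exact: H3.
rewrite size_enc_cat size_enc1 size_W; lia.
Qed.
End Pads.

Lemma least_ex (Q : nat -> Prop) k : Q k -> exists m, Q m /\ forall k', Q k' -> m <= k'.
Proof.
elim/ltn_ind: k => k IH Hk.
case: (classic (exists k', k' < k /\ Q k')) => [[k' [H1 H2]]|Hn].
  exact: IH H2.
exists k; split => // k' Hk'; rewrite leqNgt; apply/negP => Hlt.
by apply: Hn; exists k'.
Qed.

Lemma exists_min pc A : (exists p, pc_decides pc p A) -> exists m, min_proof_len pc A m.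
Proof.
move=> [p Hp].
have [m [[q [Hq1 Hq2]] Hm]] := @least_ex (fun k => exists q, pc_decides pc q A /\ ndigits q = k) _
   (ex_intro _ p (conj Hp erefl)).
exists m; split; first by exists q.
by move=> p' Hp'; apply: Hm; exists p'.
Qed.

Lemma bounded_max (R : nat -> Prop) b : (forall x, R x -> x <= b) -> (exists x, R x) ->
  exists m, R m /\ forall x, R x -> x <= m.
Proof.
elim: b R => [|b IH] R Hb [x Hx].
  by exists x; split => // y /Hb; move: (Hb _ Hx); rewrite !leqn0 => /eqP -> /eqP ->.
case: (classic (R b.+1)) => Hb1.
  by exists b.+1; split.
apply: (IH R) => [y Hy|]; last by exists x.
have := Hb _ Hy; rewrite leq_eqVlt => /orP [/eqP E|] //.
by rewrite E in Hy.
Qed.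

Definition pBp (c : nat) (cg : prog) : prog :=
  pComp padd [:: pComp cg [:: pComp padd [:: pProj 0; pconst c]];
                 pComp padd [:: pComp pmul [:: pconst 4; pProj 0]; pconst 2]].

Lemma Bp_c c cg (g : nat -> nat) : (forall n, eval cg [:: n] (g n)) ->
  forall n, eval (pBp c cg) [:: n] (g (n + c) + (4 * n + 2)).
Proof.
move=> Hg n.
have Hgc : computes cg 1 (fun v => g (nth 0 v 0)) by case=> [|a [|]] //= _; apply: Hg.
have := comp2_c add_c (comp1_c Hgc (comp2_c add_c (proj_c (i := 0) (k := 1) isT) (const_c c (k := 1))))
   (comp2_c add_c (comp2_c mul_c (const_c 4 (k := 1)) (proj_c (i := 0) (k := 1) isT)) (const_c 2 (k := 1))).
by move=> /(_ [:: n] erefl).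
Qed.

Lemma T_and (fs rs : nat -> nat -> bool) (T : form -> Prop) A B :
  theory fs rs T -> T A -> T B -> T (And A B).
Proof.
move=> [Ts Tc] HA HB; apply: Tc.
  have [w1 f1] := Ts _ HA; have [w2 f2] := Ts _ HB.
  by split; [rewrite /= w1 w2|move=> n /=; rewrite negb_or f1 f2].
by move=> M HM rho; split; apply: HM.
Qed.

Lemma not_thm_Not (fs rs : nat -> nat -> bool) (T : form -> Prop) A :
  consistent T -> T A -> ~ thm T (code (Not A)).
Proof.
move=> Tc HA [B [HB /code_inj E]]; subst.
by apply: Tc; exists A.
Qed.

Unset Implicit Arguments.
Theorem mainTheorem18 (fs rs : nat -> nat -> bool) (T : form -> Prop)
    (g f : nat -> nat) :
  fs 0 0 -> fs 1 1 ->
  theory fs rs T -> consistent T -> comp_enum T -> represents_all fs rs T ->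
  computable1 g -> monotone g -> bigOmega g id ->
  littleo (fun n => f n.+1) g ->
  forall pc : nat -> nat -> bool, canonical T pc -> computable_pc pc ->
  exists P : form -> Prop, proof_problem T P /\
    exists h : nat -> nat, proof_complexity pc P h /\ bigO h g /\ ~ bigO h f.
Proof.
move=> F0 F1 Tth Tcons _ Trep [cg Hg] gmono [C0 [N0 HOm]] Hlo pc Hcan Hpcc.
have Hcan' := Hcan.
case: Hcan' => [[PV1 PV2] [C2 [C3 [C4 C5]]]].
have [K1 Hpad] := pad_cost F0 Tth Hcan.
set Nst := N0.+1.
set Cu := 2 + 8 * C0 + K1.
have gpos : forall n, Nst <= n -> 0 < g n.
  move=> n Hn; have := HOm n ltac:(lia); rewrite /id; case: (g n) => [|k] //; rewrite muln0; lia.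
pose P S := exists H j p, S = And H (W j) /\ T H /\ 20 <= j /\ Nst <= size (ser S) /\
   pc p (code H) /\ ndigits p <= g (size (ser S)).
have PT : forall S, P S -> T S.
  move=> S [H [j [p [-> [TH _]]]]]; exact: (T_and Tth TH (T_W F0 Tth j)).
have Pub : forall S, P S -> exists q, pc q (code S) /\ ndigits q <= Cu * g (size (ser S)).
  move=> S [H [j [p [ES [TH [Hj [HN [Hp Hpl]]]]]]]].
  have [ls Els] := proof_list Hcan Hp.
  have [ls2 [Hls2 Hsz2]] := Hpad j Hj.
  rewrite Els in Hp.
  have := C4 _ _ _ _ Hp Hls2; rewrite -ES => Hq.
  exists (rd (enc (ls ++ ls2 ++ [:: ser S]))); split => //.
  have Hn := HOm _ (ltnW HN); rewrite /= in Hn.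
  have gp := gpos _ HN.
  move: Hpl; rewrite Els ndigits_enc ndigits_enc !size_enc_cat size_enc1 => Hpl.
  have Hsz : size (ser S) = (size (ser H) + j).+1 by rewrite ES /= size_cat size_W //; lia.
  rewrite /Cu !mulnDl; nia.
have Pmin : forall S m, P S -> min_proof_len pc S m -> m <= Cu * g (size (ser S)).
  move=> S m /Pub [q [Hq1 Hq2]] [_ Hm].
  by apply: leq_trans (Hm q _) Hq2; rewrite /pc_decides Hq1.
have Tmin : forall S, T S -> exists m, min_proof_len pc S m.
  by move=> S TS; apply: exists_min; have [p Hp] := PV1 _ TS; exists p; rewrite /pc_decides Hp.
have Hex : forall n, exists v,
   ((forall A m, P A -> ndigits (code A) <= n -> min_proof_len pc A m -> m <= v) /\
    ((exists A, P A /\ ndigits (code A) <= n /\ min_proof_len pc A v) \/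
     ((forall A, P A -> n < ndigits (code A)) /\ v = 0))) /\ v <= Cu * g n.
  move=> n.
  case: (classic (exists v, exists S, P S /\ ndigits (code S) <= n /\ min_proof_len pc S v)) => Hc.
    have Rb : forall x, (exists S, P S /\ ndigits (code S) <= n /\ min_proof_len pc S x) -> x <= Cu * g n.
      move=> x [S [HS1 [HS2 HS3]]]; apply: leq_trans (Pmin _ _ HS1 HS3) _.
      by apply: leq_mul => //; apply: gmono; rewrite -ndigits_rd.
    have [v [[S [HS1 [HS2 HS3]]] Hv]] := bounded_max Rb Hc.
    exists v; split; last by apply: Rb; exists S.
    split; last by left; exists S.
    by move=> A m HA HAn Hm; apply: Hv; exists A.
  exists 0; split => //; split; first by move=> A m HA HAn Hm; exfalso; apply: Hc; exists m, A.
  right; split => // A HA; rewrite ltnNge; apply/negP => HAn.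
  have [m Hm] := Tmin _ (PT _ HA).
  by apply: Hc; exists m, A.
pose h n := proj1_sig (constructive_indefinite_description _ (Hex n)).
have Hh : forall n, _ := fun n => proj2_sig (constructive_indefinite_description _ (Hex n)).
exists P; split; first by move=> A /PT.
exists h; split; first by move=> n; have [[H1 H2] _] := Hh n; split.
split; first by exists Cu, 0 => n _; have [_ H] := Hh n.
move=> [C' [N' Hb]].
have [N2 HN2] := Hlo (2 * C').
set N3 := N' + N2 + Nst.
set c := 21 + N3.
have [H [TH HHp]] := L1 F0 F1 Tth Tcons Trep (proj1 Hcan) Hpcc (Bp_c c Hg).
set a := size (ser H).
rewrite /code ndigits_rd -/(code H) -/a in HHp.
have [L [[p0 [Hp0 Ep0]] HL]] := Tmin _ TH.
have Hp0' : pc p0 (code H).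
  move: Hp0; rewrite /pc_decides; case/orP => // Hn.
  by have := PV2 _ (not_thm_Not fs rs Tcons TH) p0; rewrite Hn.
have LB := HHp _ Hp0'; rewrite Ep0 in LB.
set lb := a + c.
have C0pos : 0 < C0.
  by have := HOm N0.+1 (leqnSn _); rewrite /id lt0n; apply: contraTneq => ->; rewrite mul0n.
have [n1 Hn1] : exists n1, (lb <= n1) && (L <= g n1).
  exists (N0 + lb + C0 * L); apply/andP; split; first lia.
  have := HOm (N0 + lb + C0 * L) ltac:(lia); rewrite /id => Hx.
  rewrite -(leq_pmul2l C0pos); lia.
case: (ex_minnP (ex_intro (fun n1 => (lb <= n1) && (L <= g n1)) n1 Hn1)) => n /andP [Hn1' Hn2'] Hmin.
have nlb : lb < n.
  rewrite ltn_neqAle Hn1' andbT; apply/eqP => E; subst n.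
  have := gmono lb (a + c) (leqnn _); lia.
have gprev : g n.-1 < L.
  rewrite ltnNge; apply/negP => K.
  have := Hmin n.-1; rewrite K andbT => /(_ ltac:(lia)); lia.
set j := n - a - 1.
set S := And H (W j).
have szS : size (ser S) = n by rewrite /S /= size_cat size_W -/a; lia.
have PS : P S.
  exists H, j, p0; do !split => //; try lia.
  by rewrite szS Ep0.
have [mS HmS] := Tmin _ (PT _ PS).
have [[Hc1 _] _] := Hh n.
have hge : mS <= h n by apply: (Hc1 S mS PS) => //; rewrite /code ndigits_rd szS.
have mSge : L <= mS + 2 * a + 1.
  have [[q [Hq Eq]] _] := HmS.
  have Hq' : pc q (code S).
    move: Hq; rewrite /pc_decides; case/orP => // Hn.
    by have := PV2 _ (not_thm_Not fs rs Tcons (PT _ PS)) q; rewrite Hn.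
  have [ls Els] := proof_list Hcan Hq'.
  rewrite Els in Hq'.
  have [HH _] := C5 _ _ _ Hq'.
  have := HL _ (introT orP (or_introl HH)).
  by rewrite ndigits_enc size_enc_cat size_enc1 -ndigits_enc -Els Eq -/a; lia.
have Hfn := Hb n ltac:(lia).
have Hln := HN2 n.-1 ltac:(lia).
have En : n.-1.+1 = n by lia.
rewrite En in Hln.
nia.
Qed.
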